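(* Let $\tau$ be a row-standard tableau with $\tau\in D_i$, and let $j$ be the entry in the box immediately above $i$. Then $n_{\mathrm{inv}}(\delta_i(\tau))=n_{\mathrm{inv}}(\tau)-1$ if $(\min(i,j),\max(i,j))$ is an inversion of $\tau$, and $n_{\mathrm{inv}}(\delta_i(\tau))=n_{\mathrm{inv}}(\tau)+1$ otherwise.
   Context: Fix a Young diagram $Y$ with $n$ boxes (rows drawn top to bottom, left-justified). A row-standard tableau of shape $Y$ is a bijective numbering of its boxes by $1,\dots,n$ increasing left to right along rows; it is standard if also increasing top to bottom along columns. An inversion of a row-standard $\tau$ is a pair $i<j$ in the same column such that either (i) $i$ or $j$ has no box immediately to its right and $i$ is below $j$, or (ii) $i,j$ have right neighbours $i',j'$ with $i'>j'$; $n_{\mathrm{inv}}(\tau)$ is their number. For $i\in\{1,\dots,n\}$, $D_i$ is the set of row-standard tableaux $\tau$ such that: (1) $i$ is not in the first row, and letting $j$ be the entry immediately above $i$: (2) if $i$ has a right neighbour $i'$ then $j<i'$, and if $j$ has a right neighbour $j'$ then $i<j'$; (3) for every $k$ in the same column as $i,j$ with $\min(i,j)<k<\max(i,j)$, exactly one of $(\min(i,j),k)$ and $(k,\max(i,j))$ is an inversion. For $\tau\in D_i$, if $i_1<\dots<i_q=i$ are the entries of the row of $i$ up to $i$ and $j_1<\dots<j_q=j$ those of the row of $j$ up to $j$, then $\delta_i(\tau)$ is the row-standard tableau obtained by swapping $i_k$ and $j_k$ for every $k=1,\dots,q$. *)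

(* Defs.v *)
From mathcomp Require Import all_boot.
Set Implicit Arguments. Unset Strict Implicit. Unset Printing Implicit Defensive.

(* A tableau is the list of its rows, top row first (row index 0 is the top;
   larger row index = lower).  Entry in row r, column c (both 0-based). *)
Definition tableau := seq (seq nat).

Definition young_shape (T : tableau) : bool :=
  all (fun row => 0 < size row) T && sorted geq (map size T).

Definition row_standard (T : tableau) : bool :=
  [&& young_shape T,
      perm_eq (flatten T) (iota 1 (size (flatten T))) &
      all (sorted ltn) T].

Definition entry (T : tableau) (r c : nat) : nat := nth 0 (nth [::] T r) c.

Definition row_of (T : tableau) (x : nat) : nat := find (fun row => x \in row) T.
Definition col_of (T : tableau) (x : nat) : nat := index x (nth [::] T (row_of T x)).

Definition has_right (T : tableau) (x : nat) : bool :=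
  (col_of T x).+1 < size (nth [::] T (row_of T x)).
Definition right_of (T : tableau) (x : nat) : nat :=
  entry T (row_of T x) (col_of T x).+1.

Definition is_inv (T : tableau) (a b : nat) : bool :=
  [&& a < b, a \in flatten T, b \in flatten T,
      col_of T a == col_of T b &
      ((~~ has_right T a || ~~ has_right T b) && (row_of T b < row_of T a))
      || [&& has_right T a, has_right T b & right_of T b < right_of T a]].

Definition n_inv (T : tableau) : nat :=
  \sum_(a <- flatten T) \sum_(b <- flatten T) is_inv T a b.

(* the entry immediately above i (meaningful when i is not in the first row) *)
Definition above (T : tableau) (i : nat) : nat :=
  entry T (row_of T i).-1 (col_of T i).

Definition in_D (T : tableau) (i : nat) : bool :=
  let j := above T i in
  [&& i \in flatten T,
      0 < row_of T i,
      has_right T i ==> (j < right_of T i),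
      has_right T j ==> (i < right_of T j) &
      all (fun k =>
             ((col_of T k == col_of T i) && (minn i j < k < maxn i j)) ==>
             (is_inv T (minn i j) k (+) is_inv T k (maxn i j)))
          (flatten T)].

Definition delta (T : tableau) (i : nat) : tableau :=
  let r := row_of T i in
  let q := (col_of T i).+1 in
  let Ri := nth [::] T r in
  let Rj := nth [::] T r.-1 in
  set_nth [::] (set_nth [::] T r (take q Rj ++ drop q Ri)) r.-1
          (take q Ri ++ drop q Rj).

(* Main.v *)
Require Import Defs.
From mathcomp Require Import all_boot.
From Stdlib Require Import Lia.
Set Implicit Arguments. Unset Strict Implicit. Unset Printing Implicit Defensive.

Definition swap (x y a : nat) := if a == x then y else if a == y then x else a.

Lemma swap_sum (F : seq nat) (P : nat -> nat -> bool) lo hi :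
  uniq F -> lo \in F -> hi \in F -> lo < hi ->
  (forall k, k \in F -> lo < k < hi -> P lo k + P k hi = P k lo + P hi k) ->
  \sum_(a <- F) \sum_(b <- F) ((swap lo hi a < swap lo hi b) && P a b)
    + P lo hi
  = \sum_(a <- F) \sum_(b <- F) ((a < b) && P a b) + P hi lo.
Proof.
move=> uF loF hiF lohi HP.
have hilo : (hi == lo) = false by rewrite gtn_eqF.
have hiR : hi \in rem lo F by rewrite (rem_filter _ uF) mem_filter /= hilo.
set R := rem hi (rem lo F).
have pF : perm_eq F [:: lo, hi & R].
  apply: perm_trans (perm_to_rem loF) _; rewrite perm_cons; exact: perm_to_rem.
have uR : uniq [:: lo, hi & R] by rewrite -(perm_uniq pF).
move: uR => /= /andP[]; rewrite inE eq_sym hilo /= => loR /andP[hiR' uR].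
have RF : {subset R <= F} by move=> k kR; rewrite (perm_mem pF) !inE kR !orbT.
rewrite !(perm_big _ pF) /=.
under eq_bigr do rewrite (perm_big _ pF).
under [in RHS]eq_bigr do rewrite (perm_big _ pF).
rewrite !big_cons /=.
have sw1 : swap lo hi lo = hi by rewrite /swap eqxx.
have sw2 : swap lo hi hi = lo by rewrite /swap hilo eqxx.
have swR : forall k, k \in R -> swap lo hi k = k.
  move=> k kR; rewrite /swap.
  have /negPf-> : k != lo by apply: contraNneq loR => <-.
  by have /negPf-> : k != hi by apply: contraNneq hiR' => <-.
rewrite sw1 sw2 ltnn /=.
have E1 : \sum_(j <- R) (hi < swap lo hi j) && P lo j = \sum_(j <- R) (hi < j) && P lo j.
  by apply: eq_big_seq => k kR; rewrite swR.
have E2 : \sum_(j <- R) (lo < swap lo hi j) && P hi j = \sum_(j <- R) (lo < j) && P hi j.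
  by apply: eq_big_seq => k kR; rewrite swR.
have E3 : \sum_(j <- R) \sum_(i <- [:: lo, hi & R]) (swap lo hi j < swap lo hi i) && P j i
   = \sum_(j<-R) ((j<hi)&&P j lo + ((j<lo)&&P j hi + \sum_(i<-R) (j<i)&&P j i)).
  apply: eq_big_seq => k kR; rewrite !big_cons swR // sw1 sw2; congr (_ + (_ + _)).
  by apply: eq_big_seq => b bR; rewrite swR.
have E4 : \sum_(j <- R) \sum_(i <- [:: lo, hi & R]) (j < i) && P j i
   = \sum_(j<-R) ((j<lo)&&P j lo + ((j<hi)&& P j hi + \sum_(i<-R)(j<i)&& P j i)).
  by apply: eq_big_seq => k kR; rewrite !big_cons.
rewrite E1 E2 E3 E4 !big_split /= lohi ltnNge (ltnW lohi) ltnn /=.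
set D := \sum_(i <- R) \sum_(j <- R) _.
have key : \sum_(k <- R) (((k < hi) && P k lo) + ((k < lo) && P k hi) + ((hi < k) && P lo k) + ((lo < k) && P hi k))
  = \sum_(k <- R) (((k < lo) && P k lo) + ((k < hi) && P k hi) + ((lo < k) && P lo k) + ((hi < k) && P hi k)).
  apply: eq_big_seq => k kR.
  have klo : k != lo by apply: contraNneq loR => <-.
  have khi : k != hi by apply: contraNneq hiR' => <-.
  case: (ltngtP k lo) => [klt|kgt|/eqP]; last by rewrite (negbTE klo).
    rewrite (ltn_trans klt lohi) ltnNge (ltnW (ltn_trans klt lohi)) /=; rewrite -!plusE; lia.
  case: (ltngtP k hi) => [klt2|kgt2|/eqP]; last by rewrite (negbTE khi).
    have := HP k (RF k kR); rewrite kgt klt2 => /(_ isT) /=; rewrite -!plusE; lia.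
  by [].
move: key; rewrite !big_split /= => key.
rewrite -!plusE in key *; lia.
Qed.

Lemma flatten_split (T : tableau) s : s < size T ->
  flatten T = flatten (take s T) ++ nth [::] T s ++ flatten (drop s.+1 T).
Proof. by move=> sT; rewrite -{1}(cat_take_drop s T) flatten_cat (drop_nth [::] sT). Qed.

Lemma uniq_row (T : tableau) s : uniq (flatten T) -> uniq (nth [::] T s).
Proof.
move=> u; case: (ltnP s (size T)) => sT; last by rewrite nth_default.
by move: u; rewrite (flatten_split sT) !cat_uniq => /and3P[_ _ /and3P[]].
Qed.

Lemma row_of_entry (T : tableau) s c : uniq (flatten T) -> s < size T ->
  c < size (nth [::] T s) -> row_of T (entry T s c) = s.
Proof.
move=> u sT cs; set x := entry T s c.
have xr : x \in nth [::] T s by exact: mem_nth.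
have nh : ~~ has (fun row => x \in row) (take s T).
  apply/hasPn => row rowin; apply/negP => xrow.
  move: u; rewrite (flatten_split sT) cat_uniq => /and3P[_ /hasPn H _].
  have := H x; rewrite mem_cat xr /= => /(_ isT) /negP; apply.
  by apply/flattenP; exists row.
rewrite /row_of -{1}(cat_take_drop s T) find_cat (negbTE nh) size_take sT.
by rewrite (drop_nth [::] sT) /= xr addn0.
Qed.

Lemma col_of_entry (T : tableau) s c : uniq (flatten T) -> s < size T ->
  c < size (nth [::] T s) -> col_of T (entry T s c) = c.
Proof.
move=> u sT cs; rewrite /col_of row_of_entry //.
by apply: index_uniq => //; apply: uniq_row.
Qed.

Lemma hr_entry (T : tableau) s c : uniq (flatten T) -> s < size T ->
  c < size (nth [::] T s) -> has_right T (entry T s c) = (c.+1 < size (nth [::] T s)).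
Proof. by move=> u sT cs; rewrite /has_right row_of_entry // col_of_entry. Qed.

Lemma ro_entry (T : tableau) s c : uniq (flatten T) -> s < size T ->
  c < size (nth [::] T s) -> right_of T (entry T s c) = entry T s c.+1.
Proof. by move=> u sT cs; rewrite /right_of row_of_entry // col_of_entry. Qed.

Lemma mem_pos (T : tableau) x : x \in flatten T ->
  [/\ row_of T x < size T, col_of T x < size (nth [::] T (row_of T x))
    & entry T (row_of T x) (col_of T x) = x].
Proof.
move=> /flattenP[row rin xr].
have h : has (fun row => x \in row) T by apply/hasP; exists row.
have xin : x \in nth [::] T (row_of T x) := nth_find [::] h.
by split; [rewrite -has_find | rewrite index_mem | rewrite /entry nth_index].
Qed.

Lemma entry_mem (T : tableau) s c : s < size T ->
  c < size (nth [::] T s) -> entry T s c \in flatten T.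
Proof. by move=> sT cs; apply/flattenP; exists (nth [::] T s); rewrite ?mem_nth. Qed.

Definition Q (T : tableau) a b :=
  (col_of T a == col_of T b) &&
  (((~~ has_right T a || ~~ has_right T b) && (row_of T b < row_of T a))
   || [&& has_right T a, has_right T b & right_of T b < right_of T a]).

Lemma is_invE T a b : is_inv T a b = [&& a < b, a \in flatten T, b \in flatten T & Q T a b].
Proof. by []. Qed.

Lemma Q_tot (T : tableau) a b : uniq (flatten T) -> a \in flatten T -> b \in flatten T ->
  a != b -> col_of T a = col_of T b -> Q T b a = ~~ Q T a b.
Proof.
move=> u aF bF ab cab.
have [ra ca ea] := mem_pos aF; have [rb cb eb] := mem_pos bF.
have rab : row_of T a != row_of T b.
  apply: contra ab => /eqP rab; by rewrite -ea -eb rab cab.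
rewrite /Q cab eqxx /=.
case: (boolP (has_right T a)) => ha; case: (boolP (has_right T b)) => hb /=;
  try by case: ltngtP rab.
have roab : right_of T a != right_of T b.
  apply: contra rab => /eqP e.
  move: ha hb; rewrite /has_right => ha hb.
  have := row_of_entry u ra ha; have := row_of_entry u rb hb.
  by rewrite -/(right_of T a) -/(right_of T b) e => -> ->.
by case: ltngtP roab.
Qed.

Section Delta.
Variables (T : tableau) (r c : nat).
Hypotheses (uT : uniq (flatten T)) (r0 : 0 < r) (rT : r < size T)
  (cRi : c < size (nth [::] T r))
  (RiRj : size (nth [::] T r) <= size (nth [::] T r.-1)).
Local Notation Ri := (nth [::] T r).
Local Notation Rj := (nth [::] T r.-1).
Local Notation A := (take c.+1 Ri ++ drop c.+1 Rj).
Local Notation B := (take c.+1 Rj ++ drop c.+1 Ri).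
Local Notation T' := (set_nth [::] (set_nth [::] T r B) r.-1 A).

Lemma r1r : (r.-1 == r) = false.
Proof. by case: r r0 => // n _; rewrite /= ltn_eqF. Qed.
Lemma r1T : r.-1 < size T.
Proof. by apply: leq_ltn_trans rT; apply: leq_pred. Qed.

Lemma sizeT' : size T' = size T.
Proof.
rewrite !size_set_nth prednK //.
have h1 : maxn r.+1 (size T) = size T by apply/maxn_idPr.
by rewrite h1; apply/maxn_idPr; apply: ltnW.
Qed.

Lemma nthT' m : nth [::] T' m = if m == r.-1 then A else if m == r then B else nth [::] T m.
Proof. by rewrite !nth_set_nth /= nth_set_nth. Qed.

Lemma size_nthT' m : size (nth [::] T' m) = size (nth [::] T m).
Proof.
have c1 : c.+1 <= size Rj by apply: leq_trans RiRj.
rewrite nthT'; case: eqP => [->|_]; last case: eqP => [->|_] //.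
  by rewrite size_cat size_takel // size_drop subnKC.
by rewrite size_cat size_takel // size_drop subnKC.
Qed.

Lemma entryT' m x : entry T' m x =
  if m == r.-1 then (if x < c.+1 then entry T r x else entry T r.-1 x)
  else if m == r then (if x < c.+1 then entry T r.-1 x else entry T r x)
  else entry T m x.
Proof.
rewrite /entry nthT'.
have sz1 : size (take c.+1 Ri) = c.+1 by rewrite size_takel.
have sz2 : size (take c.+1 Rj) = c.+1 by rewrite size_takel // (leq_trans cRi RiRj).
case: eqP => _; last case: eqP => _ //.
  rewrite nth_cat sz1; case: ltnP => xc; first by rewrite nth_take.
  by rewrite nth_drop subnKC.
rewrite nth_cat sz2; case: ltnP => xc; first by rewrite nth_take.
by rewrite nth_drop subnKC.
Qed.

Lemma T'split : T' = take r.-1 T ++ A :: B :: drop r.+1 T.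
Proof.
have sz : size (take r T) = r by rewrite size_takel // ltnW.
rewrite (set_nthE T) rT set_nthE size_cat sz /= ltn_addr; last by rewrite ltn_predL.
rewrite take_cat sz ltn_predL r0 take_takel ?leq_pred //.
by rewrite prednK // drop_cat sz ltnn subnn drop0.
Qed.

Lemma Tsplit : T = take r.-1 T ++ Rj :: Ri :: drop r.+1 T.
Proof.
rewrite -{1}(cat_take_drop r.-1 T) (drop_nth [::] r1T) prednK // (drop_nth [::] rT) //.
Qed.

Lemma permT' : perm_eq (flatten T') (flatten T).
Proof.
apply: (@perm_trans _ (flatten (take r.-1 T ++ Rj :: Ri :: drop r.+1 T))); last by rewrite -Tsplit.
rewrite T'split !flatten_cat /= perm_cat2l !catA perm_cat2r.
apply/permP => p; rewrite !count_cat.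
have e1 := cat_take_drop c.+1 Ri; have e2 := cat_take_drop c.+1 Rj.
rewrite -{3}e1 -{3}e2 !count_cat -!plusE; lia.
Qed.

Lemma uT' : uniq (flatten T').
Proof. by rewrite (perm_uniq permT'). Qed.

Local Notation i := (entry T r c).
Local Notation j := (entry T r.-1 c).
Definition rsw s := if s == r then r.-1 else if s == r.-1 then r else s.

Lemma cRj : c < size Rj. Proof. exact: leq_trans cRi RiRj. Qed.

Lemma posT' m x : m < size T -> x < size (nth [::] T m) ->
  [/\ row_of T' (entry T' m x) = m, col_of T' (entry T' m x) = x,
      has_right T' (entry T' m x) = (x.+1 < size (nth [::] T m)) &
      right_of T' (entry T' m x) = entry T' m x.+1].
Proof.
move=> mT xm; have mT' : m < size T' by rewrite sizeT'.
have xm' : x < size (nth [::] T' m) by rewrite size_nthT'.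
by rewrite row_of_entry ?col_of_entry ?hr_entry ?ro_entry ?size_nthT' //; exact: uT'.
Qed.

Lemma posT m x : m < size T -> x < size (nth [::] T m) ->
  [/\ row_of T (entry T m x) = m, col_of T (entry T m x) = x,
      has_right T (entry T m x) = (x.+1 < size (nth [::] T m)) &
      right_of T (entry T m x) = entry T m x.+1].
Proof.
by move=> mT xm; rewrite row_of_entry ?col_of_entry ?hr_entry ?ro_entry.
Qed.

Lemma ij : i != j.
Proof.
have [r1 _ _ _] := posT rT cRi; have [r2 _ _ _] := posT r1T cRj.
by apply/eqP => e; move: r1; rewrite e r2 => /eqP; rewrite r1r.
Qed.

Lemma dataT' x : x \in flatten T ->
  [/\ col_of T' x = col_of T x,
      has_right T' x = has_right T (swap i j x),
      right_of T' x = right_of T (swap i j x) &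
      row_of T' x = if col_of T x < c then rsw (row_of T x) else row_of T (swap i j x)].
Proof.
move=> xF.
case: (eqVneq x i) => [->|xi].
  have e : i = entry T' r.-1 c by rewrite entryT' eqxx ltnSn.
  rewrite /swap eqxx.
  have [a1 a2 a3 a4] := posT rT cRi; have [b1 b2 b3 b4] := posT r1T cRj.
  rewrite a2 ltnn b1 b3 b4 e.
  have [d1 d2 d3 d4] := posT' r1T cRj.
  by rewrite d1 d2 d3 d4 entryT' eqxx ltnn.
case: (eqVneq x j) => [->|xj].
  have e : j = entry T' r c by rewrite entryT' eq_sym r1r eqxx ltnSn.
  rewrite /swap eq_sym (negbTE ij) eqxx.
  have [a1 a2 a3 a4] := posT rT cRi; have [b1 b2 b3 b4] := posT r1T cRj.
  rewrite b2 ltnn a1 a3 a4 e.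
  have [d1 d2 d3 d4] := posT' rT cRi.
  by rewrite d1 d2 d3 d4 entryT' eq_sym r1r eqxx ltnn.
have -> : swap i j x = x by rewrite /swap (negbTE xi) (negbTE xj).
have [xs xc xe] := mem_pos xF.
move: xs xc xe; set s := row_of T x; set cx := col_of T x => xs xc xe.
set s' := if cx < c then rsw s else s.
have -> : has_right T x = (cx.+1 < size (nth [::] T s)) by [].
have -> : right_of T x = entry T s cx.+1 by [].
have cRj := cRj.
have [sT cxs ex] : [/\ s' < size T, cx < size (nth [::] T s') & entry T' s' cx = x].
  rewrite /s' /rsw entryT' -xe; case: (ltnP cx c) => cxc.
    case: (s =P r) => [Es|Ns]; first by rewrite eqxx r1T (ltn_trans cxc cRj) ltnS (ltnW cxc) Es.
    case: (s =P r.-1) => [Es|Ns2]; first by rewrite eq_sym r1r eqxx rT (ltn_trans cxc cRi) ltnS (ltnW cxc) Es.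
    by move/eqP/negbTE: Ns => ->; move/eqP/negbTE: Ns2 => ->.
  case: (s =P r.-1) => [Es|Ns2].
    rewrite xs xc; case: ifP => cxc2; last by rewrite Es.
    have ecx : cx = c by apply/eqP; rewrite eqn_leq cxc -ltnS cxc2.
    by move: xj; rewrite -xe Es ecx eqxx.
  case: (s =P r) => [Es|Ns].
    rewrite xs xc; case: ifP => cxc2; last by rewrite Es.
    have ecx : cx = c by apply/eqP; rewrite eqn_leq cxc -ltnS cxc2.
    by move: xi; rewrite -xe Es ecx eqxx.
  by [].
have [d1 d2 d3 d4] := posT' sT cxs.
rewrite -ex d1 d2 d3 d4; split => //.
  rewrite /s' /rsw; case: (ltnP cx c) => cxc //.
  case: (s =P r) => [->|Ns]; first by rewrite !(leq_ltn_trans cxc) //.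
  case: (s =P r.-1) => [->|Ns2]; first by rewrite !(leq_ltn_trans cxc).
  done.
rewrite /s' /rsw entryT'; case: (ltnP cx c) => cxc.
  case: (s =P r) => [Es|Ns]; first by rewrite eqxx ltnS cxc Es.
  case: (s =P r.-1) => [Es|Ns2]; first by rewrite eq_sym r1r eqxx ltnS cxc Es.
  by move/eqP/negbTE: Ns => ->; move/eqP/negbTE: Ns2 => ->.
case: (s =P r.-1) => [Es|Ns2].
  by rewrite ltnS ltnNge cxc /= Es.
case: (s =P r) => [Es|Ns].
  by rewrite ltnS ltnNge cxc /= Es.
by [].
Qed.

Lemma rsw_id s : s != r -> s != r.-1 -> rsw s = s.
Proof. by rewrite /rsw => /negbTE-> /negbTE->. Qed.

Lemma rsw_ltl s t : s != r -> s != r.-1 -> (rsw t < s) = (t < s).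
Proof.
move=> /eqP sr /eqP sr1; rewrite /rsw.
case: (t =P r) => [->|_]; last case: (t =P r.-1) => [->|_] //.
  apply/idP/idP => /ltP h; apply/ltP; move: r0 => /ltP; lia.
apply/idP/idP => /ltP h; apply/ltP; move: r0 => /ltP; lia.
Qed.

Lemma rsw_ltr s t : s != r -> s != r.-1 -> (s < rsw t) = (s < t).
Proof.
move=> /eqP sr /eqP sr1; rewrite /rsw.
case: (t =P r) => [->|_]; last case: (t =P r.-1) => [->|_] //.
  apply/idP/idP => /ltP h; apply/ltP; move: r0 => /ltP; lia.
apply/idP/idP => /ltP h; apply/ltP; move: r0 => /ltP; lia.
Qed.

Lemma colij : col_of T i = c /\ col_of T j = c.
Proof. by have [_ -> _ _] := posT rT cRi; have [_ -> _ _] := posT r1T cRj. Qed.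

Lemma col_swap x : col_of T (swap i j x) = col_of T x.
Proof.
have [ci cj] := colij; rewrite /swap.
by case: (x =P i) => [->|_]; last case: (x =P j) => [->|_] //; rewrite ?ci ?cj.
Qed.

Lemma swap_id x : col_of T x != c -> swap i j x = x.
Proof.
have [ci cj] := colij; rewrite /swap => h.
case: (x =P i) => [e|_]; first by rewrite e ci eqxx in h.
by case: (x =P j) => [e|_] //; rewrite e cj eqxx in h.
Qed.

Lemma hr_left x : col_of T x < c -> ~~ has_right T x -> (row_of T x != r) && (row_of T x != r.-1).
Proof.
move=> xc; rewrite /has_right; apply: contraR; rewrite negb_and !negbK => /orP[]/eqP->.
  exact: leq_ltn_trans xc cRi.
exact: leq_ltn_trans xc cRj.
Qed.

Lemma Q_delta a b : a \in flatten T -> b \in flatten T ->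
  Q T' a b = Q T (swap i j a) (swap i j b).
Proof.
move=> aF bF.
have [ca ha ra rowa] := dataT' aF; have [cb hb rb rowb] := dataT' bF.
rewrite /Q ca cb ha hb ra rb rowa rowb !col_swap.
case: eqP => cab //=.
rewrite -cab; case: (ltnP (col_of T a) c) => cac; last by [].
have cbc : col_of T b < c by rewrite -cab.
rewrite !swap_id ?ltn_eqF //.
congr (_ || _).
case: (boolP (has_right T a)) => ha'; case: (boolP (has_right T b)) => hb' //=.
- have /andP[h1 h2] := hr_left cbc hb'; by rewrite rsw_ltr ?rsw_id.
- have /andP[h1 h2] := hr_left cac ha'; by rewrite rsw_ltl ?rsw_id.
- have /andP[h1 h2] := hr_left cac ha'; by rewrite rsw_ltl ?rsw_id.
Qed.

End Delta.

Lemma swapK x y : involutive (swap x y).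
Proof.
move=> a; rewrite /swap.
case: (a =P x) => [->|ax]; first by rewrite eqxx; case: (y =P x) => [->|].
case: (a =P y) => [->|ay]; first by rewrite eqxx.
by move/eqP/negbTE: ax => ->; move/eqP/negbTE: ay => ->.
Qed.

Lemma swapC x y a : swap x y a = swap y x a.
Proof.
rewrite /swap; case: eqP => [ax|ax]; case: eqP => [ay|ay] //.
by rewrite -ax -ay.
Qed.

Lemma reindex (F : seq nat) (sw : nat -> nat) (f : nat -> nat -> nat) :
  perm_eq (map sw F) F ->
  \sum_(a <- F) \sum_(b <- F) f (sw a) (sw b) = \sum_(a <- F) \sum_(b <- F) f a b.
Proof.
move=> pm.
transitivity (\sum_(a <- map sw F) \sum_(b <- map sw F) f a b); last first.
  rewrite (perm_big _ pm); apply: eq_bigr => a _; by rewrite (perm_big _ pm).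
rewrite big_map; apply: eq_bigr => a _; by rewrite big_map.
Qed.

Theorem lemma2p1 (T : tableau) (i : nat) :
  row_standard T -> in_D T i ->
  let j := above T i in
  if is_inv T (minn i j) (maxn i j)
  then n_inv (delta T i) + 1 = n_inv T
  else n_inv (delta T i) = n_inv T + 1.
Proof.
move=> /and3P[/andP[_ srt] pI _] /and5P[iF r0 _ _ H3] /=.
have uT : uniq (flatten T) by rewrite (perm_uniq pI) iota_uniq.
have [rT cRi ei] := mem_pos iF.
move: H3 r0 rT cRi ei; rewrite /above /delta /=.
set r := row_of T i; set c := col_of T i => H3 r0 rT cRi ei.
have RiRj : size (nth [::] T r) <= size (nth [::] T r.-1).
  have := (sortedP 0 srt) r.-1; rewrite prednK // size_map => /(_ rT).
  by rewrite !(nth_map [::]) // (r1T rT).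
have cRj : c < size (nth [::] T r.-1) := leq_trans cRi RiRj.
move: H3; set j := entry T r.-1 c => H3.
have jF : j \in flatten T := entry_mem (r1T rT) cRj.
have ij' : i != j by rewrite -ei; exact: ij uT r0 rT cRi RiRj.
have [ci cj] : col_of T i = c /\ col_of T j = c by rewrite -ei; exact: colij uT rT cRi RiRj.
have [[loF hiF clo chi lohi] swE] : [/\ minn i j \in flatten T, maxn i j \in flatten T,
    col_of T (minn i j) = c, col_of T (maxn i j) = c & minn i j < maxn i j] /\
    swap (minn i j) (maxn i j) =1 swap i j.
  case: (leqP i j) => h.
    by rewrite ltn_neqAle ij' h.
  by split => // a; exact: swapC.
set lo := minn i j in H3 loF clo lohi swE *; set hi := maxn i j in H3 hiF chi lohi swE *.
set F := flatten T.
have nT : n_inv T = \sum_(a <- F) \sum_(b <- F) ((a < b) && Q T a b).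
  rewrite /n_inv; apply: eq_big_seq => a aF; apply: eq_big_seq => b bF.
  by rewrite is_invE aF bF.
set T' := set_nth _ _ _ _.
have pT' : perm_eq (flatten T') F := permT' c r0 rT.
have pm : perm_eq (map (swap i j) F) F.
  apply: uniq_perm => //.
    by rewrite (map_inj_uniq (can_inj (swapK i j))).
  move=> x; apply/mapP/idP => [[y yF ->]|xF].
    rewrite /swap; case: eqP => _ //; case: eqP => _ //.
  exists (swap i j x); last by rewrite swapK.
  rewrite /swap; case: eqP => _ //; case: eqP => _ //.
have nT' : n_inv T' = \sum_(a <- F) \sum_(b <- F) ((swap lo hi a < swap lo hi b) && Q T a b).
  rewrite /n_inv (perm_big _ pT').
  under eq_bigr do rewrite (perm_big _ pT').
  transitivity (\sum_(a <- F) \sum_(b <- F) ((a < b) && Q T (swap i j a) (swap i j b))).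
    apply: eq_big_seq => a aF; apply: eq_big_seq => b bF.
    rewrite is_invE !(perm_mem pT') aF bF /=.
    by rewrite -ei (Q_delta uT r0 rT cRi RiRj aF bF).
  under [RHS]eq_bigr do (under eq_bigr do rewrite !swE).
  rewrite -(reindex (fun a b => (swap i j a < swap i j b) && Q T a b) pm).
  by apply: eq_bigr => a _; apply: eq_bigr => b _; rewrite !swapK.
have Qf : forall a b, col_of T a != col_of T b -> Q T a b = false.
  by move=> a b /negbTE h; rewrite /Q h.
have HP : forall k, k \in F -> lo < k < hi -> Q T lo k + Q T k hi = Q T k lo + Q T hi k.
  move=> k kF /andP[lk kh].
  have := allP H3 k kF; rewrite lk kh andbT /=.
  case: (eqVneq (col_of T k) c) => ck /=.
    rewrite !is_invE lk kh loF hiF kF /= => hx.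
    rewrite (Q_tot uT loF kF (negbT (ltn_eqF lk))) ?clo ?ck //.
    rewrite (Q_tot uT kF hiF (negbT (ltn_eqF kh))) ?chi ?ck //.
    by move: hx; case: (Q T lo k); case: (Q T k hi).
  by rewrite !Qf // ?clo ?chi // eq_sym.
have := swap_sum uT loF hiF lohi HP.
rewrite -nT -nT' is_invE lohi loF hiF /=.
rewrite (Q_tot uT loF hiF (negbT (ltn_eqF lohi))) ?clo ?chi //.
by case: (Q T lo hi) => /=; rewrite ?addn0 ?addn1.
Qed.
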